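(* Let $\mu$ be a Borel probability measure on $\mathbb{R}^n$ which is spectral with spectrum $\Lambda$, let $(U_\Lambda(a))_{a\in\mathbb{R}^n}$ be the group of local translations on $L^2(\mu)$, and let $W:L^2(\mu)\to L^2(G,\mu_{Bohr})$ be the isometry determined by $We_\lambda=\tilde e_\lambda$ for $\lambda\in\Lambda$. Then $\mathcal{U}_{Bohr}(a)W=WU_\Lambda(a)$ for all $a\in\mathbb{R}^n$.
   Context: $e_\lambda(x)=e^{2\pi i\lambda\cdot x}$. $\mu$ is spectral with spectrum $\Lambda$ if $\{e_\lambda\}_{\lambda\in\Lambda}$ is an orthogonal (hence orthonormal) basis of $L^2(\mu)$. The local translations are $U_\Lambda(a)f=\sum_{\lambda\in\Lambda}e^{2\pi ia\cdot\lambda}\langle f,e_\lambda\rangle e_\lambda$, where $\langle f,g\rangle=\int f\overline g\,d\mu$. The Bohr compactification $G$ is the set of all group homomorphisms $\chi:\mathbb{R}^n\to\mathbb{T}$ with pointwise multiplication and the topology of pointwise convergence, a compact abelian group with normalized Haar measure $\mu_{Bohr}$; $\tilde e_\lambda(\chi)=\chi(\lambda)$. For $a\in\mathbb{R}^n$, $(a\cdot\chi)(x)=e^{2\pi ia\cdot x}\chi(x)$ and $(\mathcal{U}_{Bohr}(a)f)(\chi)=f(a\cdot\chi)$ for $f\in L^2(G,\mu_{Bohr})$. *)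

(* Defs.v *)
From HB Require Import structures.
From mathcomp Require Import all_boot all_order all_algebra.
From mathcomp Require Import all_classical all_reals all_analysis.
From mathcomp Require Import complex.
From mathcomp Require Import ring lra.

Set Implicit Arguments.
Unset Strict Implicit.
Unset Printing Implicit Defensive.

Import Order.TTheory GRing.Theory Num.Theory.
Local Open Scope ring_scope.
Local Open Scope classical_set_scope.

Section Defs.
Variable R : realType.

(* R^n is modelled as n.-tuple R, with its product (= Borel) sigma-algebra. *)

Definition dotp n (a x : n.-tuple R) : R := \sum_(i < n) tnth a i * tnth x i.
Definition vadd n (x y : n.-tuple R) : n.-tuple R :=
  [tuple tnth x i + tnth y i | i < n].

Definition expi (t : R) : R[i] := (cos t +i* sin t)%C.

Definition echar n (l : n.-tuple R) (x : n.-tuple R) : R[i] :=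
  expi (2 * pi * dotp l x).

Definition cre (z : R[i]) : R := complex.Re z.
Definition cim (z : R[i]) : R := complex.Im z.

Definition csq (z : R[i]) : R := cre z ^+ 2 + cim z ^+ 2.

Definition is_char n (chi : n.-tuple R -> R[i]) : Prop :=
  (forall x y, chi (vadd x y) = chi x * chi y) /\ (forall x, csq (chi x) = 1).

Lemma is_char1 n : is_char (fun _ : n.-tuple R => 1).
Proof. by split => [x y|x]; rewrite ?mulr1 // /csq /= expr1n expr0n /= addr0. Qed.

Lemma csqM (z w : R[i]) : csq (z * w) = csq z * csq w.
Proof. by case: z w => a b [c d]; rewrite /csq /=; ring. Qed.

Lemma is_charM n (chi psi : n.-tuple R -> R[i]) :
  is_char chi -> is_char psi -> is_char (fun x => chi x * psi x).
Proof.
move=> [c1 c2] [p1 p2]; split => [x y|x]; last by rewrite csqM c2 p2 mulr1.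
by rewrite c1 p1; ring.
Qed.

Lemma dotpD n (a x y : n.-tuple R) : dotp a (vadd x y) = dotp a x + dotp a y.
Proof.
rewrite /dotp -big_split /=; apply: eq_bigr => i _.
by rewrite tnth_mktuple mulrDr.
Qed.

Lemma expiD (s t : R) : expi (s + t) = expi s * expi t.
Proof. by rewrite /expi cosD sinD /=; congr (_ +i* _)%C; ring. Qed.

Lemma is_char_echar n (a : n.-tuple R) : is_char (echar a).
Proof.
split => [x y|x]; first by rewrite /echar dotpD mulrDr expiD.
by rewrite /csq /echar /expi /= cos2Dsin2.
Qed.

(* The Bohr compactification: all homomorphisms R^n -> T. *)
Record bohr n := Bohr { bval : n.-tuple R -> R[i] ; bvalP : is_char bval }.

HB.instance Definition _ n := gen_eqMixin (bohr n).
HB.instance Definition _ n := gen_choiceMixin (bohr n).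
HB.instance Definition _ n :=
  isPointed.Build (bohr n) (@Bohr n (fun _ => 1) (@is_char1 n)).

(* sigma-algebra on G generated by the evaluations chi |-> chi(x),
   i.e. the Baire sigma-algebra of the topology of pointwise convergence *)
Definition bohr_gen n : set (set (bohr n)) :=
  [set A | exists (x : n.-tuple R) (B : set R), measurable B /\
     (A = [set chi | B (cre (bval chi x))] \/ A = [set chi | B (cim (bval chi x))])].

Definition bohr_measurable n := <<s (@bohr_gen n) >>.

Lemma bohr_measurable0 n : @bohr_measurable n set0.
Proof. exact: sigma_algebra0. Qed.
Lemma bohr_measurableC n (A : set (bohr n)) :
  @bohr_measurable n A -> @bohr_measurable n (~` A).
Proof. by move=> h; rewrite -setTD; apply: sigma_algebraCD. Qed.
Lemma bohr_measurable_bigcup n (F : (set (bohr n))^nat) :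
  (forall i, @bohr_measurable n (F i)) -> @bohr_measurable n (\bigcup_i F i).
Proof. exact: sigma_algebra_bigcup. Qed.

HB.instance Definition _ n := @isMeasurable.Build default_measure_display
  (bohr n) (@bohr_measurable n) (@bohr_measurable0 n) (@bohr_measurableC n)
  (@bohr_measurable_bigcup n).

Definition bohr_mul n (psi chi : bohr n) : bohr n :=
  @Bohr n (fun x => bval psi x * bval chi x)
    (is_charM (bvalP psi) (bvalP chi)).

Definition bohr_shift n (a : n.-tuple R) (chi : bohr n) : bohr n :=
  @Bohr n (fun x => echar a x * bval chi x)
    (is_charM (is_char_echar a) (bvalP chi)).

Definition etilde n (l : n.-tuple R) (chi : bohr n) : R[i] := bval chi l.

Definition U_bohr n (a : n.-tuple R) (F : bohr n -> R[i]) : bohr n -> R[i] :=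
  fun chi => F (bohr_shift a chi).

Definition is_haar n (mub : probability (bohr n) R) : Prop :=
  forall (psi : bohr n) (A : set (bohr n)), measurable A ->
    mub ((bohr_mul psi) @^-1` A) = mub A.

Section L2.
Context d (T : measurableType d) (mu : {measure set T -> \bar R}).

Definition cmeasurable (f : T -> R[i]) : Prop :=
  measurable_fun setT (fun x => cre (f x)) /\ measurable_fun setT (fun x => cim (f x)).

Definition L2 (f : T -> R[i]) : Prop :=
  cmeasurable f /\ (\int[mu]_x (csq (f x))%:E < +oo)%E.

Definition cintegral (f : T -> R[i]) : R[i] :=
  (Rintegral mu setT (fun x => cre (f x)) +i* Rintegral mu setT (fun x => cim (f x)))%C.

Definition inner (f g : T -> R[i]) : R[i] := cintegral (fun x => f x * conjc (g x)).

Definition l2norm (f : T -> R[i]) : R := Num.sqrt (Rintegral mu setT (fun x => csq (f x))).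

End L2.

Section Spectral.
Variables (n : nat) (mu : {measure set (n.-tuple R) -> \bar R}).

Definition lincomb (s : seq (n.-tuple R * R[i])) (x : n.-tuple R) : R[i] :=
  \sum_(p <- s) p.2 * echar p.1 x.

(* {e_lambda}_{lambda in Lam} is an orthonormal basis of L^2(mu):
   orthonormal and with dense linear span *)
Definition spectral (Lam : set (n.-tuple R)) : Prop :=
  (forall l l', Lam l -> Lam l' ->
     inner mu (echar l) (echar l') = (if l == l' then 1 else 0)) /\
  (forall f, L2 mu f -> forall eps : R, 0 < eps ->
     exists s : seq (n.-tuple R * R[i]), (forall p, p \in s -> Lam p.1) /\
       l2norm mu (fun x => f x - lincomb s x) < eps).

(* g = U_Lam(a) f = sum_{lambda in Lam} e^{2 pi i a.lambda} <f, e_lambda> e_lambda,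
   the (unordered) sum converging in L^2(mu) *)
Definition is_local_transl (Lam : set (n.-tuple R)) (a : n.-tuple R)
    (f g : n.-tuple R -> R[i]) : Prop :=
  L2 mu g /\
  forall eps : R, 0 < eps ->
    exists s0 : seq (n.-tuple R), (forall l, l \in s0 -> Lam l) /\
      forall s : seq (n.-tuple R), uniq s -> (forall l, l \in s -> Lam l) ->
        {subset s0 <= s} ->
        l2norm mu (fun x => g x -
          \sum_(l <- s) echar a l * inner mu f (echar l) * echar l x) < eps.

End Spectral.

Definition is_W n (mu : {measure set (n.-tuple R) -> \bar R})
    (mub : {measure set (bohr n) -> \bar R}) (Lam : set (n.-tuple R))
    (W : (n.-tuple R -> R[i]) -> (bohr n -> R[i])) : Prop :=
  [/\ forall f, L2 mu f -> L2 mub (W f),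
      forall f g, L2 mu f -> L2 mu g -> (f = g %[ae mu]) -> (W f = W g %[ae mub]),
      forall f g (c : R[i]), L2 mu f -> L2 mu g ->
        W (fun x => f x + c * g x) = (fun chi => W f chi + c * W g chi) %[ae mub],
      forall f, L2 mu f -> l2norm mub (W f) = l2norm mu f
    & forall l, Lam l -> W (echar l) = etilde l %[ae mub]].

End Defs.

(* Main.v *)
Require Import Defs.
From HB Require Import structures.
From mathcomp Require Import all_boot all_order all_algebra.
From mathcomp Require Import all_classical all_reals all_analysis.
From mathcomp Require Import complex.
From mathcomp Require Import ring lra.
From mathcomp Require Import measurable_realfun measurable_structure measurable_function lebesgue_integral_nonneg lebesgue_integrable lebesgue_Rintegral.

Set Implicit Arguments.
Unset Strict Implicit.
Unset Printing Implicit Defensive.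
Import Order.TTheory GRing.Theory Num.Theory.
Import numFieldNormedType.Exports.
Local Open Scope ring_scope.
Local Open Scope classical_set_scope.

Local Notation mfunD := measurable_realfun.measurable_funD.
Local Notation mfunB := measurable_realfun.measurable_funB.
Local Notation mfunM := measurable_realfun.measurable_funM.
Local Notation mfunX := measurable_realfun.measurable_funX.

Section Gen.
Context (R : realType) d (T : measurableType d) (P : probability T R).

Lemma csq_ge0 (z : R[i]) : 0 <= csq z.
Proof. by rewrite /csq addr_ge0 // sqr_ge0. Qed.

Lemma csq_addle (u v : R[i]) : csq (u + v) <= 2 * csq u + 2 * csq v.
Proof.
case: u v => a b [c e]; rewrite /csq /cre /cim /=.
have h1 : 0 <= (a - c) ^+ 2 by rewrite sqr_ge0.
have h2 : 0 <= (b - e) ^+ 2 by rewrite sqr_ge0.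
rewrite -subr_ge0; set t := (X in 0 <= X).
have -> : t = (a - c) ^+ 2 + (b - e) ^+ 2 by rewrite /t; ring.
by rewrite addr_ge0.
Qed.

Lemma cmeas_lin (f g : T -> R[i]) (c : R[i]) :
  cmeasurable f -> cmeasurable g -> cmeasurable (fun x => f x + c * g x).
Proof.
case: c => c1 c2 [f1 f2] [g1 g2]; split.
- rewrite (_ : (fun x => _) = (fun x => cre (f x) + (c1 * cre (g x) - c2 * cim (g x)))); last first.
    by apply/funext => x; rewrite /cre /cim; case: (f x) => ? ?; case: (g x).
  apply: mfunD => //; apply: mfunB;
    by apply: mfunM => //; exact: measurable_cst.
- rewrite (_ : (fun x => _) = (fun x => cim (f x) + (c1 * cim (g x) + c2 * cre (g x)))); last first.
    by apply/funext => x; rewrite /cre /cim; case: (f x) => ? ?; case: (g x) => ? ? /=; ring.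
  apply: mfunD => //; apply: mfunD;
    by apply: mfunM => //; exact: measurable_cst.
Qed.

Lemma cmeas_csq (f : T -> R[i]) : cmeasurable f ->
  measurable_fun setT (fun x => csq (f x)).
Proof.
case=> f1 f2; rewrite /csq; apply: mfunD; exact: mfunX.
Qed.

Lemma cmeas_csqE (f : T -> R[i]) : cmeasurable f ->
  measurable_fun setT (EFin \o (fun x => csq (f x))).
Proof. by move=> /cmeas_csq h; exact/measurable_EFinP. Qed.

Lemma L2_lin (f g : T -> R[i]) (c : R[i]) :
  L2 P f -> L2 P g -> L2 P (fun x => f x + c * g x).
Proof.
move=> [mf If] [mg Ig]; split; first exact: cmeas_lin.
have mf' := cmeas_csqE mf; have mg' := cmeas_csqE mg.
apply: (@le_lt_trans _ _ (\int[P]_x ((2%:E * (csq (f x))%:E) + ((2 * csq c)%:E * (csq (g x))%:E)))%E).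
  apply: ge0_le_integral => //.
  - by move=> x _; rewrite lee_fin csq_ge0.
  - by apply: cmeas_csqE; exact: cmeas_lin.
  - by apply: emeasurable_funD; apply: emeasurable_funM => //; exact: measurable_cst.
  - by move=> x _; rewrite -!EFinM -EFinD lee_fin -mulrA -csqM csq_addle.
rewrite ge0_integralD //; last 4 first.
- by move=> x _; rewrite -EFinM lee_fin mulr_ge0 // csq_ge0.
- by apply: emeasurable_funM => //; exact: measurable_cst.
- by move=> x _; rewrite -EFinM lee_fin mulr_ge0 // ?mulr_ge0 // csq_ge0.
- by apply: emeasurable_funM => //; exact: measurable_cst.
rewrite ge0_integralZl //; try solve [move=> x _; rewrite lee_fin csq_ge0 | rewrite lee_fin ?mulr_ge0 ?csq_ge0 //].
rewrite ge0_integralZl //; try solve [move=> x _; rewrite lee_fin csq_ge0 | rewrite lee_fin ?mulr_ge0 ?csq_ge0 //].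
- by apply: lte_add_pinfty; apply: lte_mul_pinfty => //; rewrite lee_fin ?mulr_ge0 ?csq_ge0.
all: by move=> x _; rewrite lee_fin csq_ge0.
Qed.


Lemma cext (z w : R[i]) : cre z = cre w -> cim z = cim w -> z = w.
Proof. by case: z w => ? ? [? ?] /= -> ->. Qed.

Definition Nm (f : T -> R[i]) := Rintegral P setT (fun x => csq (f x)).

Lemma Nm_ge0 f : 0 <= Nm f.
Proof. by apply: Rintegral_ge0 => x _; exact: csq_ge0. Qed.

Lemma L2_int_csq f : L2 P f -> P.-integrable setT (EFin \o (fun x => csq (f x))).
Proof.
move=> [mf If]; apply/integrableP; split; first exact: cmeas_csqE.
rewrite (eq_integral (fun x => (csq (f x))%:E)) // => x _.
by rewrite /comp abse_EFin ger0_norm // csq_ge0.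
Qed.

Lemma L2_QE f : L2 P f -> (\int[P]_x (csq (f x))%:E)%E = (Nm f)%:E.
Proof.
move=> hf; rewrite /Nm /Rintegral fineK //.
by rewrite ge0_fin_numE ?(proj2 hf) // integral_ge0 // => x _; rewrite lee_fin csq_ge0.
Qed.

Lemma int_bound (f g : T -> R[i]) (h : T -> R) : L2 P f -> L2 P g ->
  measurable_fun setT h -> (forall x, `|h x| <= csq (f x) + csq (g x)) ->
  P.-integrable setT (EFin \o h).
Proof.
move=> hf hg mh hb.
apply: (@le_integrable _ _ _ P setT measurableT _ (EFin \o (fun x => csq (f x) + csq (g x)))).
- exact/measurable_EFinP.
- move=> x _; rewrite /comp !abse_EFin lee_fin (le_trans (hb x)) //.
  by rewrite ger0_norm // addr_ge0 // csq_ge0.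
- rewrite (_ : _ \o _ = (EFin \o (fun x => csq (f x))) \+ (EFin \o (fun x => csq (g x))))%E.
    by apply: integrableD => //; exact: L2_int_csq.
  by apply/funext => x /=; rewrite EFinD.
Qed.

Lemma re_mulc (u v : R[i]) : cre (u * conjc v) = cre u * cre v + cim u * cim v.
Proof. by case: u v => a b [c e]; rewrite /cre /cim /=; ring. Qed.
Lemma im_mulc (u v : R[i]) : cim (u * conjc v) = cim u * cre v - cre u * cim v.
Proof. by case: u v => a b [c e]; rewrite /cre /cim /=; ring. Qed.

Lemma re_bound (u v : R[i]) : `|cre (u * conjc v)| <= csq u + csq v.
Proof.
rewrite re_mulc /csq; case: u v => a b [c e]; rewrite /cre /cim /=.
have h1 := sqr_ge0 (a + c); have h2 := sqr_ge0 (a - c).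
have h3 := sqr_ge0 (b + e); have h4 := sqr_ge0 (b - e).
have h5 := sqr_ge0 (a + e); have h6 := sqr_ge0 (a - e).
have h7 := sqr_ge0 (b + c); have h8 := sqr_ge0 (b - c).
have h9 := sqr_ge0 a; have h10 := sqr_ge0 b; have h11 := sqr_ge0 c; have h12 := sqr_ge0 e.
rewrite ler_norml; apply/andP; split; nra.
Qed.
Lemma im_bound (u v : R[i]) : `|cim (u * conjc v)| <= csq u + csq v.
Proof.
rewrite im_mulc /csq; case: u v => a b [c e]; rewrite /cre /cim /=.
have h1 := sqr_ge0 (a + c); have h2 := sqr_ge0 (a - c).
have h3 := sqr_ge0 (b + e); have h4 := sqr_ge0 (b - e).
have h5 := sqr_ge0 (a + e); have h6 := sqr_ge0 (a - e).
have h7 := sqr_ge0 (b + c); have h8 := sqr_ge0 (b - c).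
have h9 := sqr_ge0 a; have h10 := sqr_ge0 b; have h11 := sqr_ge0 c; have h12 := sqr_ge0 e.
rewrite ler_norml; apply/andP; split; nra.
Qed.

Lemma int_re f g : L2 P f -> L2 P g ->
  P.-integrable setT (EFin \o (fun x => cre (f x * conjc (g x)))).
Proof.
move=> hf hg; apply: (int_bound hf hg); last by move=> x; exact: re_bound.
rewrite (_ : (fun x => _) = (fun x => cre (f x) * cre (g x) + cim (f x) * cim (g x))).
  by case: hf => -[? ?] _; case: hg => -[? ?] _; apply: mfunD; apply: mfunM.
by apply/funext => x; rewrite re_mulc.
Qed.

Lemma int_im f g : L2 P f -> L2 P g ->
  P.-integrable setT (EFin \o (fun x => cim (f x * conjc (g x)))).
Proof.
move=> hf hg; apply: (int_bound hf hg); last by move=> x; exact: im_bound.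
rewrite (_ : (fun x => _) = (fun x => cim (f x) * cre (g x) - cre (f x) * cim (g x))).
  by case: hf => -[? ?] _; case: hg => -[? ?] _; apply: mfunB; apply: mfunM.
by apply/funext => x; rewrite im_mulc.
Qed.

Definition Int (h : T -> R) := P.-integrable setT (EFin \o h).

Lemma IntZ a h : Int h -> Int (fun x => a * h x).
Proof.
move=> ih; rewrite /Int (_ : _ \o _ = (fun x => a%:E * (EFin \o h) x))%E.
  exact: integrableZl.
by apply/funext => x; rewrite /comp EFinM.
Qed.

Lemma IntD h1 h2 : Int h1 -> Int h2 -> Int (fun x => h1 x + h2 x).
Proof.
move=> i1 i2; rewrite /Int (_ : _ \o _ = (EFin \o h1) \+ (EFin \o h2))%E.
  exact: integrableD.
by apply/funext => x; rewrite /comp EFinD.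
Qed.

Lemma IntB h1 h2 : Int h1 -> Int h2 -> Int (fun x => h1 x - h2 x).
Proof.
move=> i1 i2; rewrite (_ : (fun x => _) = (fun x => h1 x + (-1) * h2 x)).
  by apply: IntD => //; exact: IntZ.
by apply/funext => x; rewrite mulN1r.
Qed.

Lemma RintD h1 h2 : Int h1 -> Int h2 ->
  Rintegral P setT (fun x => h1 x + h2 x) = Rintegral P setT h1 + Rintegral P setT h2.
Proof. by move=> i1 i2; rewrite RintegralD. Qed.

Lemma RintB h1 h2 : Int h1 -> Int h2 ->
  Rintegral P setT (fun x => h1 x - h2 x) = Rintegral P setT h1 - Rintegral P setT h2.
Proof. by move=> i1 i2; rewrite RintegralB. Qed.

Lemma RintZ a h : Int h ->
  Rintegral P setT (fun x => a * h x) = a * Rintegral P setT h.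
Proof. by move=> i1; rewrite RintegralZl. Qed.

Lemma RintT0 : Rintegral P setT (fun _ => 0) = 0.
Proof. by rewrite Rintegral_cst // mul0r. Qed.

Lemma inner_linl f g k (c : R[i]) : L2 P f -> L2 P g -> L2 P k ->
  inner P (fun x => f x + c * g x) k = inner P f k + c * inner P g k.
Proof.
case: c => c1 c2 hf hg hk; rewrite /inner /cintegral.
have -> : (fun x => cre ((f x + (c1 +i* c2)%C * g x) * conjc (k x))) =
  (fun x => cre (f x * conjc (k x)) + (c1 * cre (g x * conjc (k x)) - c2 * cim (g x * conjc (k x)))).
  apply/funext => x; case: (f x) => ? ?; case: (g x) => ? ?; case: (k x) => ? ?.
  by rewrite /cre /cim /=; ring.
have -> : (fun x => cim ((f x + (c1 +i* c2)%C * g x) * conjc (k x))) =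
  (fun x => cim (f x * conjc (k x)) + (c1 * cim (g x * conjc (k x)) + c2 * cre (g x * conjc (k x)))).
  apply/funext => x; case: (f x) => ? ?; case: (g x) => ? ?; case: (k x) => ? ?.
  by rewrite /cre /cim /=; ring.
have r1 := int_re hf hk; have r2 := int_re hg hk.
have i1 := int_im hf hk; have i2 := int_im hg hk.
rewrite RintD //; last by apply: IntB; exact: IntZ.
rewrite RintB; try exact: IntZ.
rewrite RintD //; last by apply: IntD; exact: IntZ.
rewrite RintD; try exact: IntZ.
rewrite !RintZ //; try by apply: cext.
Qed.

Lemma inner_conj f g : L2 P f -> L2 P g -> inner P g f = conjc (inner P f g).
Proof.
move=> hf hg; rewrite /inner /cintegral.
have -> : (fun x => cre (g x * conjc (f x))) = (fun x => cre (f x * conjc (g x))).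
  by apply/funext => x; rewrite !re_mulc; ring.
have -> : (fun x => cim (g x * conjc (f x))) = (fun x => (-1) * cim (f x * conjc (g x))).
  by apply/funext => x; rewrite !im_mulc; ring.
rewrite RintZ; last exact: int_im.
by apply: cext; rewrite /cre /cim /=; ring.
Qed.

Lemma inner_self f : L2 P f -> inner P f f = (Nm f)%:C%C.
Proof.
move=> hf; rewrite /inner /cintegral /Nm.
have -> : (fun x => cre (f x * conjc (f x))) = (fun x => csq (f x)).
  by apply/funext => x; rewrite re_mulc /csq; ring.
have -> : (fun x => cim (f x * conjc (f x))) = (fun x => 0).
  by apply/funext => x; rewrite im_mulc; ring.
by rewrite RintT0.
Qed.

Lemma L2_0 : L2 P (fun _ => 0).
Proof.
split; first by split; exact: measurable_cst.
rewrite (eq_integral (fun _ => 0%E)); first by rewrite integral0.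
by move=> x _; rewrite /csq /cre /cim /= expr0n /= addr0.
Qed.

Lemma inner_0l k : inner P (fun _ => 0) k = 0.
Proof.
rewrite /inner /cintegral.
have -> : (fun x => cre (0 * conjc (k x))) = (fun x => 0) by apply/funext => x; rewrite mul0r.
have -> : (fun x => cim (0 * conjc (k x))) = (fun x => 0) by apply/funext => x; rewrite mul0r.
by rewrite RintT0.
Qed.

Lemma conjcD (u v : R[i]) : conjc (u + v) = conjc u + conjc v.
Proof. by case: u v => ? ? [? ?]; apply: cext; rewrite /cre /cim /=; ring. Qed.
Lemma conjcM (u v : R[i]) : conjc (u * v) = conjc u * conjc v.
Proof. by case: u v => ? ? [? ?]; apply: cext; rewrite /cre /cim /=; ring. Qed.
Lemma conjc_sum (I : Type) (s : seq I) (F : I -> R[i]) :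
  conjc (\sum_(i <- s) F i) = \sum_(i <- s) conjc (F i).
Proof. by apply: (big_morph conjc conjcD); apply: cext; rewrite /cre /cim /=; ring. Qed.

Lemma inner_linr f g k (c : R[i]) : L2 P f -> L2 P g -> L2 P k ->
  inner P k (fun x => f x + c * g x) = inner P k f + conjc c * inner P k g.
Proof.
move=> hf hg hk; rewrite inner_conj //; last exact: L2_lin.
by rewrite inner_linl // conjcD conjcM -(inner_conj hf hk) -(inner_conj hg hk).
Qed.

Lemma creD (u v : R[i]) : cre (u + v) = cre u + cre v.
Proof. by case: u v => ? ? [? ?]. Qed.
Lemma cre0 : cre (0 : R[i]) = 0. Proof. by []. Qed.
Lemma cre_sum (I : Type) (s : seq I) (F : I -> R[i]) :
  cre (\sum_(i <- s) F i) = \sum_(i <- s) cre (F i).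
Proof. by elim: s => [|i s IH]; rewrite ?big_nil ?big_cons ?creD ?IH. Qed.

Section Sums.
Variables (I : eqType) (e : I -> T -> R[i]).

Definition Sg (s : seq I) (dd : I -> R[i]) := fun x => \sum_(i <- s) dd i * e i x.

Lemma Sg_cons i s dd : Sg (i :: s) dd = fun x => Sg s dd x + dd i * e i x.
Proof. by apply/funext => x; rewrite /Sg big_cons addrC. Qed.

Lemma Sg_nil dd : Sg [::] dd = fun _ => 0.
Proof. by apply/funext => x; rewrite /Sg big_nil. Qed.

Lemma L2_Sg s dd : (forall i, i \in s -> L2 P (e i)) -> L2 P (Sg s dd).
Proof.
elim: s => [|i s IH] hs; first by rewrite Sg_nil; exact: L2_0.
rewrite Sg_cons; apply: L2_lin; first by apply: IH => j js; apply: hs; rewrite inE js orbT.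
by apply: hs; rewrite inE eqxx.
Qed.

Lemma inner_Sgl s dd k : (forall i, i \in s -> L2 P (e i)) -> L2 P k ->
  inner P (Sg s dd) k = \sum_(i <- s) dd i * inner P (e i) k.
Proof.
elim: s => [|i s IH] hs hk; first by rewrite Sg_nil inner_0l big_nil.
have hs' : forall j, j \in s -> L2 P (e j) by move=> j js; apply: hs; rewrite inE js orbT.
rewrite Sg_cons inner_linl //; last by apply: hs; rewrite inE eqxx.
  by rewrite IH // big_cons addrC.
exact: L2_Sg.
Qed.

Lemma inner_Sgr s dd k : (forall i, i \in s -> L2 P (e i)) -> L2 P k ->
  inner P k (Sg s dd) = \sum_(i <- s) conjc (dd i) * inner P k (e i).
Proof.
move=> hs hk; rewrite inner_conj //; last exact: L2_Sg.
rewrite inner_Sgl // conjc_sum; apply: eq_big_seq => i iS.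
by rewrite conjcM inner_conj ?conjcK //; apply: hs.
Qed.


Definition ONs (s : seq I) := forall i j, i \in s -> j \in s ->
  inner P (e i) (e j) = if i == j then 1 else 0.

Lemma inner_SgSg s dd dd' : uniq s -> (forall i, i \in s -> L2 P (e i)) -> ONs s ->
  inner P (Sg s dd) (Sg s dd') = \sum_(i <- s) dd i * conjc (dd' i).
Proof.
move=> us hs ON; rewrite inner_Sgl //; last exact: L2_Sg.
apply: eq_big_seq => i iS; congr (_ * _).
rewrite inner_Sgr //; last by apply: hs.
rewrite (@bigD1_seq _ _ _ _ _ i _ iS us) /= ON // eqxx mulr1 big1_seq ?addr0 //.
by move=> j /andP[ji jS]; rewrite ON // eq_sym (negbTE ji) mulr0.
Qed.

Lemma key h s dd : L2 P h -> uniq s -> (forall i, i \in s -> L2 P (e i)) -> ONs s ->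
  Nm (fun x => h x - Sg s dd x) =
  Nm h + \sum_(i <- s) (csq (inner P h (e i) - dd i) - csq (inner P h (e i))).
Proof.
move=> hh us hs ON.
have hS := L2_Sg dd hs.
have -> : (fun x => h x - Sg s dd x) = (fun x => h x + (-1) * Sg s dd x).
  by apply/funext => x; rewrite mulN1r.
have hD := L2_lin (-1) hh hS.
rewrite -[LHS]/(cre ((Nm _)%:C%C)) -inner_self //.
rewrite inner_linl // inner_linr // inner_linr // inner_self // inner_SgSg // inner_Sgr //.
rewrite inner_Sgl //.
have c1 : conjc (-1 : R[i]) = -1 by apply: cext; rewrite /cre /cim /=; ring.
rewrite c1.
rewrite [\sum_(i <- s) dd i * inner P (e i) h](eq_big_seq (fun i => dd i * conjc (inner P h (e i)))); last first.
  by move=> i iS; rewrite (inner_conj hh (hs i iS)).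
have -> : ((Nm h)%:C%C + -1 * (\sum_(i <- s) conjc (dd i) * inner P h (e i)) +
   -1 * (\sum_(i <- s) dd i * conjc (inner P h (e i)) + -1 * (\sum_(i <- s) dd i * conjc (dd i))))
  = (Nm h)%:C%C + \sum_(i <- s) (dd i * conjc (dd i) - conjc (dd i) * inner P h (e i) - dd i * conjc (inner P h (e i))).
  by rewrite big_split /= big_split /= !sumrN; ring.
rewrite creD cre_sum; congr (_ + _); apply: eq_bigr => i _.
move: (inner P h (e i)) (dd i) => [? ?] [? ?]; rewrite /csq /cre /cim /=; ring.
Qed.

Lemma bessel h s : L2 P h -> uniq s -> (forall i, i \in s -> L2 P (e i)) -> ONs s ->
  \sum_(i <- s) csq (inner P h (e i)) <= Nm h.
Proof.
move=> hh us hs ON.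
have := Nm_ge0 (fun x => h x - Sg s (fun i => inner P h (e i)) x).
rewrite key //.
under eq_bigr do rewrite subrr /csq /cre /cim /= expr0n /= addr0 add0r.
by rewrite sumrN subr_ge0.
Qed.

Lemma main_ineq h s dd : L2 P h -> uniq s -> (forall i, i \in s -> L2 P (e i)) -> ONs s ->
  \sum_(i <- s) csq (inner P h (e i) - dd i) <= Nm (fun x => h x - Sg s dd x).
Proof.
move=> hh us hs ON; rewrite key // sumrB addrCA lerDl subr_ge0.
exact: bessel.
Qed.

Lemma pyth s dd : uniq s -> (forall i, i \in s -> L2 P (e i)) -> ONs s ->
  Nm (Sg s dd) = \sum_(i <- s) csq (dd i).
Proof.
move=> us hs ON.
have := key dd L2_0 us hs ON.
have -> : (fun x => 0 - Sg s dd x) = (fun x => (-1) * Sg s dd x).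
  by apply/funext => x; rewrite sub0r mulN1r.
have -> : Nm (fun x => (-1) * Sg s dd x) = Nm (Sg s dd).
  rewrite /Nm; congr (Rintegral _ _ _); apply/funext => x.
  by case: (Sg s dd x) => ? ?; rewrite /csq /cre /cim /=; ring.
have N0 : Nm (fun _ : T => 0) = 0.
  rewrite /Nm -RintT0; congr (Rintegral _ _ _); apply/funext => x.
  by rewrite /csq /cre /cim /= expr0n /= addr0.
move=> ->; rewrite N0 add0r; apply: eq_bigr => i _.
rewrite inner_0l; case: (dd i) => ? ?; rewrite /csq /cre /cim /=; ring.
Qed.
End Sums.
End Gen.



Section Bohr.
Context (R : realType) (n : nat).

Lemma ev_re_meas (x : n.-tuple R) :
  measurable_fun setT (fun chi : bohr R n => cre (bval chi x)).
Proof.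
move=> _ B mB; rewrite setTI; apply: sub_gen_smallest.
by exists x, B; split => //; left.
Qed.

Lemma ev_im_meas (x : n.-tuple R) :
  measurable_fun setT (fun chi : bohr R n => cim (bval chi x)).
Proof.
move=> _ B mB; rewrite setTI; apply: sub_gen_smallest.
by exists x, B; split => //; right.
Qed.

Lemma shift_meas (a : n.-tuple R) : measurable_fun setT (bohr_shift a).
Proof.
apply: (@measurability _ _ _ _ setT (bohr_shift a) (@bohr_gen R n)) => //.
move=> _ [_ [x [B [mB [->|->]]]] <-].
- have mf : measurable_fun setT (fun chi : bohr R n => cre (echar a x * bval chi x)).
    rewrite (_ : (fun chi => _) = (fun chi : bohr R n => cre (echar a x) * cre (bval chi x) - cim (echar a x) * cim (bval chi x))).
      by apply: mfunB; apply: mfunM => //; try exact: measurable_cst; [exact: ev_re_meas|exact: ev_im_meas].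
    by apply/funext => chi; case: (echar a x) => ? ?; case: (bval chi x).
  exact: (mf measurableT B mB).
- have mf : measurable_fun setT (fun chi : bohr R n => cim (echar a x * bval chi x)).
    rewrite (_ : (fun chi => _) = (fun chi : bohr R n => cre (echar a x) * cim (bval chi x) + cim (echar a x) * cre (bval chi x))).
      by apply: mfunD; apply: mfunM => //; try exact: measurable_cst; [exact: ev_im_meas|exact: ev_re_meas].
    by apply/funext => chi; case: (echar a x) => ? ?; case: (bval chi x) => ? ? /=; rewrite /cim /=; ring.
  exact: (mf measurableT B mB).
Qed.

Variable mub : probability (bohr R n) R.
Hypothesis Hhaar : is_haar mub.

Lemma haar_shift a (A : set (bohr R n)) : measurable A ->
  mub (bohr_shift a @^-1` A) = mub A.
Proof. exact: (Hhaar (@Bohr R n (echar a) (is_char_echar a))). Qed.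

Lemma ae_shift a (F G : bohr R n -> R[i]) : F = G %[ae mub] ->
  (fun chi => F (bohr_shift a chi)) = (fun chi => G (bohr_shift a chi)) %[ae mub].
Proof.
case=> N [mN N0 sub]; exists (bohr_shift a @^-1` N); split.
- by rewrite -[X in measurable X]setTI; exact: (shift_meas a measurableT mN).
- by rewrite haar_shift.
- by move=> chi /= hchi; apply: sub => /= h; apply: hchi => _; exact: h.
Qed.

Lemma haar_int a (F : bohr R n -> \bar R) : measurable_fun setT F ->
  (forall x, (0 <= F x)%E) ->
  (\int[mub]_x F (bohr_shift a x) = \int[mub]_x F x)%E.
Proof.
move=> mF F0; have ms := shift_meas a.
rewrite (@eq_measure_integral _ _ _ setT (pushforward mub (bohr_shift a)) mub F); last first.
  by move=> A mA _; symmetry; exact: haar_shift.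
by rewrite (ge0_integral_pushforward ms).
Qed.

End Bohr.



Section Tup.
Context (R : realType) (n : nat) (mu : probability (n.-tuple R) R).

Lemma dotp_meas (l : n.-tuple R) : measurable_fun setT (fun x : n.-tuple R => dotp l x).
Proof.
rewrite /dotp; apply: measurable_sum => i; apply: mfunM.
  exact: measurable_cst.
exact: measurable_tnth.
Qed.

Lemma echar_cmeas (l : n.-tuple R) : cmeasurable (echar l).
Proof.
have m2 : measurable_fun setT (fun x : n.-tuple R => 2 * pi * dotp l x).
  by apply: mfunM; [exact: measurable_cst | exact: dotp_meas].
split.
- exact: (measurableT_comp (continuous_measurable_fun (@continuous_cos R)) m2).
- exact: (measurableT_comp (continuous_measurable_fun (@continuous_sin R)) m2).
Qed.

Lemma L2_echar (l : n.-tuple R) : L2 mu (echar l).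
Proof.
split; first exact: echar_cmeas.
rewrite (eq_integral (fun _ => 1%E)); last by move=> x _; rewrite (proj2 (is_char_echar l)).
rewrite integral_cst // mul1e; exact: (le_lt_trans (probability_le1 mu measurableT) (ltry 1)).
Qed.

Lemma regroup (t : seq (n.-tuple R * R[i])) (s : seq (n.-tuple R)) :
  uniq s -> (forall p, p \in t -> p.1 \in s) ->
  lincomb t = Sg (@echar R n) s (fun l => \sum_(p <- t | p.1 == l) p.2).
Proof.
move=> us ht; apply/funext => x; rewrite /lincomb /Sg.
under [RHS]eq_bigr do rewrite mulr_suml.
rewrite (eq_bigr (fun l => \sum_(p <- t) (if p.1 == l then p.2 * echar p.1 x else 0))); last first.
  move=> l _; rewrite big_mkcond; apply: eq_bigr => p _.
  by case: eqP => // ->.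
rewrite exchange_big /=; apply: eq_big_seq => p pt.
rewrite (@bigD1_seq _ _ _ _ _ p.1 _ (ht p pt) us) /= eqxx big1_seq ?addr0 //.
by move=> l /andP[lp _]; rewrite eq_sym (negbTE lp).
Qed.

End Tup.



Section WS.
Context (R : realType) (n : nat) (mu : probability (n.-tuple R) R)
  (mub : probability (bohr R n) R) (Lam : set (n.-tuple R))
  (W : (n.-tuple R -> R[i]) -> (bohr R n -> R[i])).
Hypothesis hW : is_W mu mub Lam W.

Lemma W0 : W (fun _ => 0) = (fun _ => 0) %[ae mub].
Proof.
case: hW => _ _ W3 _ _.
have := W3 (fun _ => 0) (fun _ => 0) 1 (L2_0 mu) (L2_0 mu).
rewrite (_ : (fun _ : n.-tuple R => 0 + 1 * 0) = (fun _ => 0)); last first.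
  by apply/funext => x; rewrite mulr0 addr0.
apply: filterS => chi h Tchi; have := h Tchi; rewrite mul1r => e.
by have := congr1 (fun z => z - W (fun _ => 0) chi) e; rewrite subrr addrK => <-.
Qed.

Lemma W_Sg s dd : (forall l, l \in s -> Lam l) ->
  W (Sg (@echar R n) s dd) = (fun chi => \sum_(l <- s) dd l * etilde l chi) %[ae mub].
Proof.
case: hW => _ _ W3 _ W5.
elim: s => [|l s IH] hs.
  by rewrite Sg_nil; apply: filterS W0 => chi h /h ->; rewrite big_nil.
have hs' : forall j, j \in s -> Lam j by move=> j js; apply: hs; rewrite inE js orbT.
have h1 := IH hs'.
have h2 := W5 l (hs l (mem_head _ _)).
have h3 := W3 (Sg (@echar R n) s dd) (echar l) (dd l)
  (@L2_Sg _ _ _ mu _ (@echar R n) s dd (fun i _ => L2_echar mu i)) (L2_echar mu l).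
rewrite Sg_cons; apply: filterS3 h1 h2 h3 => chi e1 e2 e3 Tc.
by rewrite e3 // e1 // e2 // big_cons addrC.
Qed.

Lemma W_sub f g : L2 mu f -> L2 mu g ->
  W (fun x => f x - g x) = (fun chi => W f chi - W g chi) %[ae mub].
Proof.
case: hW => _ _ W3 _ _ hf hg.
have := W3 f g (-1) hf hg.
rewrite (_ : (fun x => f x + -1 * g x) = (fun x => f x - g x)); last first.
  by apply/funext => x; rewrite mulN1r.
by apply: filterS => chi h /h ->; rewrite mulN1r.
Qed.

Lemma Nm_W h : L2 mu h -> Nm mub (W h) = Nm mu h.
Proof.
case: hW => _ _ _ W4 _ hh.
have := W4 h hh; rewrite /l2norm -/(Nm mub (W h)) -/(Nm mu h).
by move/(congr1 (fun z => z ^+ 2)); rewrite !sqr_sqrtr // Nm_ge0.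
Qed.

Lemma L2_W h : L2 mu h -> L2 mub (W h).
Proof. by case: hW => W1 _ _ _ _; exact: W1. Qed.

End WS.

Section Misc.
Context (R : realType) d (T : measurableType d) (P : probability T R).

Lemma Nm_ae (F G : T -> R[i]) : cmeasurable F -> cmeasurable G ->
  F = G %[ae P] -> Nm P F = Nm P G.
Proof.
move=> mF mG h; rewrite /Nm /Rintegral; congr fine.
apply: ae_eq_integral => //; try exact: cmeas_csqE.
by apply: filterS h => x h1 Tx; rewrite /= h1.
Qed.

Lemma Nm_0_ae (F : T -> R[i]) : L2 P F -> Nm P F = 0 -> F = (fun _ => 0) %[ae P].
Proof.
move=> hF N0.
have Q0 : (\int[P]_x (csq (F x))%:E = 0)%E by rewrite L2_QE // N0.
have : (\int[P]_(x in setT) `|(csq (F x))%:E| = 0)%E.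
  rewrite -Q0; apply: eq_integral => x _; rewrite abse_EFin ger0_norm //; exact: csq_ge0.
move/(ae_eq_integral_abs P measurableT (cmeas_csqE (proj1 hF))).
apply: filterS => x h Tx; have := h Tx; rewrite /cst => -[].
case: (F x) => a b; rewrite /csq /cre /cim /= => /eqP.
rewrite paddr_eq0 ?sqr_ge0 // !sqrf_eq0 => /andP[/eqP -> /eqP ->] //.
Qed.

Lemma Nm_subC (F G : T -> R[i]) : Nm P (fun x => F x - G x) = Nm P (fun x => G x - F x).
Proof.
rewrite /Nm; congr (Rintegral _ _ _); apply/funext => x.
by case: (F x) (G x) => ? ? [? ?]; rewrite /csq /cre /cim /=; ring.
Qed.

Lemma L2_sub (F G : T -> R[i]) : L2 P F -> L2 P G -> L2 P (fun x => F x - G x).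
Proof.
move=> hF hG; rewrite (_ : (fun x => _) = (fun x => F x + -1 * G x)).
  exact: L2_lin.
by apply/funext => x; rewrite mulN1r.
Qed.

End Misc.



Section More.
Context (R : realType) d (T : measurableType d) (P : probability T R).

Lemma norm_lt (h : T -> R[i]) (eps : R) : 0 < eps -> l2norm P h < eps -> Nm P h < eps ^+ 2.
Proof.
move=> e0; rewrite /l2norm -/(Nm P h).
rewrite -[X in _ < X](ger0_norm (ltW e0)) -sqrtr_sqr ltr_sqrt //.
by rewrite exprn_gt0.
Qed.

Lemma Nm0 : Nm P (fun _ => 0) = 0.
Proof.
rewrite /Nm -(RintT0 P); congr (Rintegral _ _ _); apply/funext => x.
by rewrite /csq /cre /cim /= expr0n /= addr0.
Qed.

Lemma csq_add4 (u v w z : R[i]) :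
  csq (u + v + w + z) <= 8 * (csq u + csq v + csq w + csq z).
Proof.
apply: (le_trans (csq_addle _ _)).
have h1 := csq_addle (u + v) w; have h2 := csq_addle u v.
have := csq_ge0 u; have := csq_ge0 v; have := csq_ge0 w; have := csq_ge0 z.
lra.
Qed.

Lemma Nm_add4 (A B C E : T -> R[i]) : L2 P A -> L2 P B -> L2 P C -> L2 P E ->
  Nm P (fun x => A x + B x + C x + E x) <= 8 * (Nm P A + Nm P B + Nm P C + Nm P E).
Proof.
move=> hA hB hC hE.
have hAB : L2 P (fun x => A x + B x).
  by rewrite (_ : (fun x => _) = (fun x => A x + 1 * B x)); [exact: L2_lin|apply/funext => x; rewrite mul1r].
have hABC : L2 P (fun x => A x + B x + C x).
  by rewrite (_ : (fun x => _) = (fun x => (A x + B x) + 1 * C x)); [exact: L2_lin|apply/funext => x; rewrite mul1r].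
have hS : L2 P (fun x => A x + B x + C x + E x).
  by rewrite (_ : (fun x => _) = (fun x => (A x + B x + C x) + 1 * E x)); [exact: L2_lin|apply/funext => x; rewrite mul1r].
have iA : Int P (fun x => csq (A x)) := L2_int_csq hA.
have iB : Int P (fun x => csq (B x)) := L2_int_csq hB.
have iC : Int P (fun x => csq (C x)) := L2_int_csq hC.
have iE : Int P (fun x => csq (E x)) := L2_int_csq hE.
have iAB := IntD iA iB; have iABC := IntD iAB iC; have iS := IntD iABC iE.
rewrite /Nm -(RintD iA iB) -(RintD iAB iC) -(RintD iABC iE) -(RintZ 8 iS).
apply: le_Rintegral => //.
- exact: L2_int_csq.
- exact: IntZ.
- by move=> x _; exact: csq_add4.
Qed.

End More.

Section Shift.
Context (R : realType) (n : nat) (mub : probability (bohr R n) R).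
Hypothesis Hhaar : is_haar mub.

Lemma L2_shift a (F : bohr R n -> R[i]) : L2 mub F ->
  L2 mub (fun chi => F (bohr_shift a chi)) /\
  Nm mub (fun chi => F (bohr_shift a chi)) = Nm mub F.
Proof.
move=> [[m1 m2] IF].
have hi : (\int[mub]_x (csq (F (bohr_shift a x)))%:E = \int[mub]_x (csq (F x))%:E)%E.
  apply: (haar_int Hhaar a (F := fun x => (csq (F x))%:E)).
    exact: (cmeas_csqE (conj m1 m2)).
  by move=> x; rewrite lee_fin csq_ge0.
split; last by rewrite /Nm /Rintegral hi.
split; last by rewrite hi.
split.
- exact: (measurableT_comp m1 (shift_meas a)).
- exact: (measurableT_comp m2 (shift_meas a)).
Qed.

End Shift.



Theorem theorem4p11 (R : realType) (n : nat)
    (mu : probability (n.-tuple R) R) (Lam : set (n.-tuple R))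
    (mub : probability (bohr R n) R)
    (W : (n.-tuple R -> R[i]) -> (bohr R n -> R[i])) :
  is_haar mub ->
  spectral mu Lam ->
  is_W mu mub Lam W ->
  forall (a : n.-tuple R) (f g : n.-tuple R -> R[i]),
    L2 mu f -> is_local_transl mu Lam a f g ->
    U_bohr a (W f) = W g %[ae mub].
Proof.
move=> Hhaar [Horth Hdense] hW a f g Hf [Hg Hloc].
have [W1 W2 W3 W4 W5] := hW.
pose sh := bohr_shift a.
pose D := fun chi => W f (sh chi) - W g chi.
have LWf := W1 f Hf; have LWg := W1 g Hg.
have LD : L2 mub D := L2_sub (L2_shift Hhaar a LWf).1 LWg.
have Le : forall l, L2 mu (@echar R n l) := fun l => L2_echar mu l.
suff ND : Nm mub D = 0.
  apply: filterS (Nm_0_ae LD ND) => chi h Tc; have := h Tc.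
  by rewrite /D /U_bohr => /eqP; rewrite subr_eq0 => /eqP.
suff key : forall e, 0 < e -> Nm mub D <= e.
  apply/eqP; rewrite eq_le Nm_ge0 andbT leNgt; apply/negP => h.
  have := key _ (divr_gt0 h (ltr0n _ 2)); lra.
move=> e e0.
pose eps := Num.sqrt (e / 24).
have eps0 : 0 < eps by rewrite sqrtr_gt0 divr_gt0.
have eps2 : eps ^+ 2 = e / 24 by rewrite sqr_sqrtr // ltW // divr_gt0.
have [t [tin tnorm]] := Hdense f Hf eps eps0.
have [s0 [s0in Hs0]] := Hloc eps eps0.
pose s := undup (s0 ++ map fst t).
have us : uniq s := undup_uniq _.
have sin : forall l, l \in s -> Lam l.
  move=> l; rewrite mem_undup mem_cat => /orP[/s0in //|/mapP[p pt ->]].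
  exact: tin.
have s0s : {subset s0 <= s} by move=> l ls; rewrite mem_undup mem_cat ls.
have ts : forall p, p \in t -> p.1 \in s.
  by move=> p pt; rewrite mem_undup mem_cat; apply/orP; right; apply/mapP; exists p.
pose c := fun l => \sum_(p <- t | p.1 == l) p.2.
have Treg := regroup us ts.
pose b := fun l => inner mu f (@echar R n l).
pose Gs := Sg (@echar R n) s (fun l => echar a l * b l).
pose Tc := Sg (@echar R n) s c.
pose Ta := Sg (@echar R n) s (fun l => echar a l * c l).
have ON : ONs mu (@echar R n) s.
  by move=> i j iS jS; apply: Horth; apply: sin.
have Les : forall i, i \in s -> L2 mu (@echar R n i) by move=> i _; exact: Le.
have LTc : L2 mu Tc := L2_Sg _ Les.
have LTa : L2 mu Ta := L2_Sg _ Les.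
have LGs : L2 mu Gs := L2_Sg _ Les.
have NfT : Nm mu (fun x => f x - Tc x) < eps ^+ 2.
  by apply: norm_lt => //; rewrite /Tc -Treg.
have NgG : Nm mu (fun x => g x - Gs x) < eps ^+ 2.
  exact: (norm_lt eps0 (Hs0 s us sin s0s)).
pose A := fun chi => W f (sh chi) - W Tc (sh chi).
pose B := fun chi => W Tc (sh chi) - W Ta chi.
pose C := fun chi => W Ta chi - W Gs chi.
pose E := fun chi => W Gs chi - W g chi.
have LWTc := W1 _ LTc; have LWTa := W1 _ LTa; have LWGs := W1 _ LGs.
have [LshTc _] := L2_shift Hhaar a LWTc.
have [LshWf _] := L2_shift Hhaar a LWf.
have LA : L2 mub A := L2_sub LshWf LshTc.
have LB : L2 mub B := L2_sub LshTc LWTa.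
have LC : L2 mub C := L2_sub LWTa LWGs.
have LE : L2 mub E := L2_sub LWGs LWg.
have -> : D = (fun chi => A chi + B chi + C chi + E chi).
  by apply/funext => chi; rewrite /D /A /B /C /E; ring.
apply: (le_trans (Nm_add4 LA LB LC LE)).
have NA : Nm mub A = Nm mu (fun x => f x - Tc x).
  have LWfT := L2_sub LWf LWTc.
  have [_ ->] := L2_shift Hhaar a LWfT.
  rewrite -(Nm_W hW (L2_sub Hf LTc)).
  apply: Nm_ae; [exact: LWfT.1 | exact: (W1 _ (L2_sub Hf LTc)).1 |].
  exact: ae_eq_sym (W_sub hW Hf LTc).
have NB : Nm mub B = 0.
  rewrite -(Nm0 mub); apply: Nm_ae; [exact: LB.1 | by split; exact: measurable_cst |].
  have h1 := ae_shift Hhaar a (W_Sg hW c sin).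
  have h2 := W_Sg hW (fun l => echar a l * c l) sin.
  apply: filterS2 h1 h2 => chi e1 e2 Tc'; rewrite /B e1 // e2 //; apply/eqP; rewrite subr_eq0.
  apply/eqP; apply: eq_bigr => l _; rewrite /etilde /=; ring.
have NC : Nm mub C <= Nm mu (fun x => f x - Tc x).
  have LTG := L2_sub LTa LGs.
  have -> : Nm mub C = Nm mu (fun x => Ta x - Gs x).
    rewrite -(Nm_W hW LTG); apply: Nm_ae; [exact: LC.1 | exact: (W1 _ LTG).1 |].
    exact: ae_eq_sym (W_sub hW LTa LGs).
  have -> : (fun x => Ta x - Gs x) = Sg (@echar R n) s (fun l => echar a l * c l - echar a l * b l).
    apply/funext => x; rewrite /Ta /Gs /Sg -sumrB; apply: eq_bigr => l _; ring.
  rewrite pyth //.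
  apply: le_trans (main_ineq c Hf us Les ON).
  rewrite le_eqVlt; apply/orP; left; apply/eqP; apply: eq_bigr => l _.
  rewrite -mulrBr csqM (proj2 (is_char_echar a)) mul1r /b.
  by case: (inner mu f (echar l)) (c l) => ? ? [? ?]; rewrite /csq /cre /cim /=; ring.
have NE : Nm mub E = Nm mu (fun x => g x - Gs x).
  have LGg := L2_sub LGs Hg.
  rewrite Nm_subC -(Nm_W hW (L2_sub Hg LGs)); apply: Nm_ae.
  - exact: (L2_sub LWg LWGs).1.
  - exact: (W1 _ (L2_sub Hg LGs)).1.
  exact: ae_eq_sym (W_sub hW Hg LGs).
rewrite NA NB NE.
have := Nm_ge0 mu (fun x => f x - Tc x); have := Nm_ge0 mu (fun x => g x - Gs x).
move: NfT NgG NC; rewrite eps2 => h1 h2 h3 h4 h5.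
lra.
Qed.
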